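(* Let $m\ge (K+1)^2$. The sampling rule of algorithm $\mathbf{AL_1}$ with batch size $m$ ensures that $N_a(lm)\ge (lm)^{1/2}-1$ for every arm $a\in\{1,\dots,K\}$ and every $l\ge1$ (for which the $l$-th batch has been completed).
   Context: There are $K$ arms (distributions) that can be sampled; $N_a(n)$ is the number of samples from arm $a$ among the first $n$ samples. Algorithm $\mathbf{AL_1}$ with batch size $m$ operates as follows. (1) Initialize by allocating $m$ samples to the arms in round-robin fashion, so that each arm gets at least $\lfloor m/K\rfloor$ samples; set $l=1$ (so $lm$ samples have been generated). (2) Compute a probability vector $t^*(\hat\mu(lm))\in\Sigma_K$ from the current empirical distributions $\hat\mu(lm)$ of the arms and check a stopping criterion; if not stopped: (3) compute the starvation $s_a=\big(((l+1)m)^{1/2}-N_a(lm)\big)^+$ of each arm $a$. (4) If $m\ge\sum_a s_a$, generate $s_a$ samples from each arm $a$ (first $s_1$ from arm 1, then $s_2$ from arm 2, etc.), and in addition draw $\max\{m-\sum_a s_a,0\}$ independent indices from the distribution $t^*(\hat\mu(lm))$ on $\{1,\dots,K\}$ and sample each arm $i$ as many times as $i$ occurs among them. (5) Otherwise, if $\sum_a s_a>m$, generate $\hat s_a$ samples from each arm $a$, where $(\hat s_a)$ solves the load balancing problem $\min\max_a\{s_a-\hat s_a\}$ subject to $s_a\ge\hat s_a\ge0$ for all $a$ and $\sum_a\hat s_a=m$. (6) Increment $l$ by 1 and return to step (2). *)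

(* Defs.v *)
From mathcomp Require Import all_boot.

Set Implicit Arguments. Unset Strict Implicit. Unset Printing Implicit Defensive.

(* Arms are 'I_K (arm a <-> index a, 0-based). Counts after l batches: N l a = N_a(lm). *)

Definition round_robin (K m : nat) (a : 'I_K) : nat :=
  count (fun i => i %% K == a) (iota 0 m).

(* Starvation of arm a after batch l: s_a = ((l+1)m)^{1/2} - N_a(lm))^+,
   with the (real) square root rounded down to an integer number of samples. *)
Definition starvation (K m l : nat) (Nl : 'I_K -> nat) (a : 'I_K) : nat :=
  Nat.sqrt ((l.+1) * m) - Nl a.

Definition lb_feasible (K m : nat) (s sh : 'I_K -> nat) : Prop :=
  (forall a, sh a <= s a) /\ \sum_(a < K) sh a = m.

Definition lb_obj (K : nat) (s sh : 'I_K -> nat) : nat :=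
  \max_(a < K) (s a - sh a).

Definition lb_optimal (K m : nat) (s sh : 'I_K -> nat) : Prop :=
  lb_feasible m s sh /\
  forall sh', lb_feasible m s sh' -> lb_obj s sh <= lb_obj s sh'.

(* The samples drawn from t^*(\hat\mu(lm)) are an arbitrary realisation: any
   nonnegative allocation [extra] of the remaining m - \sum_a s_a samples. *)
Definition AL1_step (K m l : nat) (Nl Nl' : 'I_K -> nat) : Prop :=
  let s := starvation m l Nl in
  if \sum_(a < K) s a <= m then
    exists extra : 'I_K -> nat,
      \sum_(a < K) extra a = m - \sum_(a < K) s a /\
      forall a, Nl' a = Nl a + s a + extra a
  else
    exists sh : 'I_K -> nat,
      lb_optimal m s sh /\ forall a, Nl' a = Nl a + sh a.

(* N is a run of AL_1 with batch size m in which batches 1..L have been completed: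
   N l a = N_a(lm) for 1 <= l <= L. *)
Definition AL1_run (K m L : nat) (N : nat -> 'I_K -> nat) : Prop :=
  (forall a, N 1 a = round_robin m a) /\
  forall l, 1 <= l -> l < L -> AL1_step m l (N l) (N l.+1).

(* Main.v *)
Require Import Defs.
From Stdlib Require Import PeanoNat Reals Lra.
From mathcomp Require Import all_boot.
From mathcomp Require Import zify.
Lemma nK (K n m l : nat) : (K+1)*(K+1) <= m -> 1 <= l -> l*m <= n*n -> K+1 <= n.
Proof. move=> h1 h2 h3. case: (leqP (K+1) n) => // h. nia. Qed.
Lemma slack (K m l N q : nat): (K+1)*(K+1) <= m -> l*m <= (N+1)*(N+1) -> q*q <= (l+1)*m -> 1 <= l -> K*(q-N) <= m.
Proof.
move=> h1 h2 h3 hl.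
have hn := @nK K (N+1) m l h1 hl h2.
case: (leqP q N) => hq. { have ->: q - N = 0 by lia. lia. }
have [t ht] : exists t, q = N + 1 + t by exists (q - N - 1); lia.
subst q.
have e: t*(2*(N+1)+t) <= m by nia.
have ->: N + 1 + t - N = t + 1 by lia.
clear h3 hq; case: t e => [|t] e; first lia.
nia.
Qed.
Lemma base (K m : nat) : 0 < K -> (K+1)*(K+1) <= m -> m <= (m %/ K + 1) * (m %/ K + 1).
Proof.
move=> K0 h. have e := divn_eq m K. have r := ltn_pmod m K0.
set d := m %/ K in e *. set r' := m %% K in e r *.
have dK : K < d + 1 by nia.
nia.
Qed.
Lemma rr_q (K : nat) (a : 'I_K) q : q <= count (fun i => i %% K == a) (iota 0 (q * K)).
Proof.
elim: q => [//|q IH].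
rewrite mulSn addnC iotaD count_cat add0n.
have : 0 < count (fun i => i %% K == a) (iota (q * K) K).
  rewrite -has_count; apply/hasP; exists (q * K + a).
    rewrite mem_iota; have := ltn_ord a; lia.
  by rewrite /= modnMDl modn_small.
lia.
Qed.
Lemma rr (K m : nat) (a : 'I_K) : m %/ K <= round_robin m a.
Proof.
rewrite /round_robin.
set d := m %/ K.
have hle : d * K <= m by apply: leq_trunc_div.
rewrite -(subnKC hle) iotaD count_cat.
apply: leq_trans (rr_q K a d) _; exact: leq_addr.
Qed.
Lemma sqrt_sp (x : nat) : Nat.sqrt x * Nat.sqrt x <= x < (Nat.sqrt x).+1 * (Nat.sqrt x).+1.
Proof. have [h1 h2] := Nat.sqrt_spec x (Nat.le_0_l _). apply/andP; split; apply/leP; [exact h1| exact h2]. Qed.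

Lemma main_nat (K m L : nat) (N : nat -> 'I_K -> nat) : (K+1)*(K+1) <= m -> AL1_run m L N ->
  forall l, 1 <= l -> l <= L -> forall a : 'I_K, l*m <= (N l a + 1)*(N l a + 1).
Proof.
move=> hm [h1 hstep]; elim=> [//|l IH] _ hlL a.
have K0 : 0 < K by case: a => /= i; lia.
case: l IH hlL => [|l] IH hlL.
  rewrite h1 mul1n. have := rr K m a => hr.
  apply: leq_trans (@base K m K0 hm) _. apply: leq_mul; lia.
have IH' := IH is_true_true (ltnW hlL).
have := hstep l.+1 is_true_true hlL. rewrite /AL1_step.
set q := Nat.sqrt (l.+2 * m).
have /andP[hq1 hq2] := sqrt_sp (l.+2 * m).
have hsum : \sum_(b < K) starvation m l.+1 (N l.+1) b <= m.
  apply: (@leq_trans (\sum_(b < K) (m %/ K))).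
    apply: leq_sum => b _. rewrite leq_divRL //. rewrite mulnC /starvation.
    apply: (@slack K m l.+1 (N l.+1 b) q) => //; try (exact: IH'); rewrite addn1; exact hq1.
  rewrite sum_nat_const card_ord mulnC. exact: leq_trunc_div.
rewrite hsum => -[extra [_ ->]].
rewrite /starvation -/q. nia.
Qed.
Theorem lemma8 (K m L : nat) (N : nat -> 'I_K -> nat) :
  (K.+1) ^ 2 <= m ->
  AL1_run m L N ->
  forall (l : nat) (a : 'I_K), 1 <= l -> l <= L ->
    Rle (Rminus (sqrt (INR (l * m))) R1) (INR (N l a)).
Proof.
move=> hm hr l a hl hlL.
have hm' : (K+1)*(K+1) <= m by move: hm; rewrite addn1 expnS expn1.
have h := @main_nat K m L N hm' hr l hl hlL a.
move/leP: h => h. apply le_INR in h.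
rewrite -!multE -plusE !mult_INR plus_INR /= in h. rewrite -multE mult_INR.
have hs := sqrt_le_1_alt _ _ h.
rewrite sqrt_square in hs; last by apply: Rplus_le_le_0_compat; [apply pos_INR| lra].
lra.
Qed.
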